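(* Let three circular arcs meet at a point $X$, forming angles of $2\pi/3$ with each other there, let $C_1,C_2,C_3$ be their centers of curvature and $r_i=|XC_i|$ their radii. Then the following are equivalent: (1) the sum of the three signed curvatures of the arcs at $X$ is zero; (2) the three points $C_1,C_2,C_3$ are collinear; (3) the three circles with centers $C_i$ and radii $r_i$ have two triple crossing points (two distinct points lying on all three circles).
   Context: Signed curvature: for a circular arc of curvature $c\ge 0$ ending at a point $X$, its signed curvature at $X$ is $c$ if the arc curves clockwise as it leaves $X$ and $-c$ if it curves counterclockwise. *)

(* Defs.v *)
From Stdlib Require Import Reals.
Open Scope R_scope.

Definition pt := (R * R)%type.

Definition vsub (P Q : pt) : pt := (fst P - fst Q, snd P - snd Q).
Definition dot (u v : pt) : R := fst u * fst v + snd u * snd v.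
(* cross u v > 0 iff v points to the left of (counterclockwise from) u *)
Definition cross (u v : pt) : R := fst u * snd v - snd u * fst v.
Definition pdist (P Q : pt) : R := sqrt (dot (vsub P Q) (vsub P Q)).
Definition unit_vec (u : pt) : Prop := dot u u = 1.

(* A circular arc ending at X is described by its center of curvature C
   (C <> X, radius |XC|) and its unit tangent direction u at X, pointing
   along the arc as it leaves X (so u is orthogonal to the radius XC). *)
Definition arc_at (X C u : pt) : Prop :=
  C <> X /\ unit_vec u /\ dot u (vsub C X) = 0.

(* Signed curvature at X: curvature 1/|XC|, positive iff the arc curves
   clockwise as it leaves X in direction u, i.e. iff the center lies to the
   right of u. *)
Definition signed_curvature (X C u : pt) : R :=
  if Rlt_dec (cross u (vsub C X)) 0 then / pdist X C else - / pdist X C.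

Definition collinear (A B C : pt) : Prop := cross (vsub B A) (vsub C A) = 0.

Definition on_circle (C : pt) (r : R) (P : pt) : Prop := pdist P C = r.

(* Main.v *)
Require Import Defs.
From Stdlib Require Import Reals Lra.
Open Scope R_scope.

Lemma cos23 : cos (2 * PI / 3) = -1/2.
Proof. replace (2 * PI / 3) with (2 * (PI / 3)) by field. apply cos_2PI3. Qed.

Lemma arc_param X C u : arc_at X C u -> exists k, k <> 0 /\
  fst C = fst X - k * snd u /\ snd C = snd X + k * fst u /\
  signed_curvature X C u = - / k /\ pdist X C = Rabs k.
Proof.
  destruct X as [x y], C as [c d], u as [a b].
  unfold arc_at, unit_vec, signed_curvature, pdist, dot, cross, vsub; simpl.
  intros [HCX [Hu Ho]].
  set (k := a * (d - y) - b * (c - x)).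
  assert (E1 : c - (x - k*b) = a*(a*(c-x)+b*(d-y)) + (c-x)*(1-(a*a+b*b)))
    by (unfold k; ring).
  assert (E2 : d - (y + k*a) = b*(a*(c-x)+b*(d-y)) + (d-y)*(1-(a*a+b*b)))
    by (unfold k; ring).
  rewrite Ho, Hu in E1, E2.
  assert (Hc : c = x - k*b) by lra.
  assert (Hd : d = y + k*a) by lra.
  assert (Hk : k <> 0).
  { intro H0. apply HCX. rewrite Hc, Hd, H0. f_equal; ring. }
  assert (Hp : sqrt ((x - c) * (x - c) + (y - d) * (y - d)) = Rabs k).
  { rewrite <- sqrt_Rsqr_abs. f_equal. rewrite Hc, Hd. unfold Rsqr.
    transitivity (k*k*(a*a+b*b)); [ring|]. rewrite Hu. ring. }
  exists k. split; [exact Hk|]. split; [exact Hc|]. split; [exact Hd|].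
  rewrite Hp. split; [|reflexivity].
  destruct (Rlt_dec k 0) as [Hl|Hl].
  - rewrite Rabs_left by exact Hl. rewrite Rinv_opp. reflexivity.
  - rewrite Rabs_right by lra. reflexivity.
Qed.

Lemma refl_point (x y c1 d1 c2 d2 c d : R) :
  let wx := c2 - c1 in let wy := d2 - d1 in
  let n := wx*wx + wy*wy in
  let cc := wx*(d1-y) - wy*(c1-x) in
  let t := 2 * cc / n in
  n <> 0 -> wx*(d-d1) - wy*(c-c1) = 0 ->
  (x + t*(-wy) - c)*(x + t*(-wy) - c) + (y + t*wx - d)*(y + t*wx - d)
  = (x-c)*(x-c) + (y-d)*(y-d).
Proof.
  intros wx wy n cc t Hn Hcol.
  assert (Htn : t * n = 2 * cc) by (unfold t; field; exact Hn).
  assert (E : (x + t*(-wy) - c)*(x + t*(-wy) - c) + (y + t*wx - d)*(y + t*wx - d)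
    - ((x-c)*(x-c) + (y-d)*(y-d)) = t*(t*n - 2*cc) - 2*t*(wx*(d-d1)-wy*(c-c1)))
    by (unfold n, cc; ring).
  rewrite Htn, Hcol in E. lra.
Qed.

Lemma perp_bis (p1 p2 q1 q2 c1 d1 c2 d2 c3 d3 : R) :
  (p1 <> q1 \/ p2 <> q2) ->
  (p1-c1)*(p1-c1)+(p2-d1)*(p2-d1) = (q1-c1)*(q1-c1)+(q2-d1)*(q2-d1) ->
  (p1-c2)*(p1-c2)+(p2-d2)*(p2-d2) = (q1-c2)*(q1-c2)+(q2-d2)*(q2-d2) ->
  (p1-c3)*(p1-c3)+(p2-d3)*(p2-d3) = (q1-c3)*(q1-c3)+(q2-d3)*(q2-d3) ->
  (c2-c1)*(d3-d1) - (d2-d1)*(c3-c1) = 0.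
Proof.
  intros Hne H1 H2 H3.
  set (ex := q1 - p1). set (ey := q2 - p2).
  assert (h2 : ex*(c2-c1)+ey*(d2-d1) = 0) by (unfold ex, ey; lra).
  assert (h3 : ex*(c3-c1)+ey*(d3-d1) = 0) by (unfold ex, ey; lra).
  set (K := (c2-c1)*(d3-d1) - (d2-d1)*(c3-c1)).
  assert (Ex : ex*K = (ex*(c2-c1)+ey*(d2-d1))*(d3-d1) - (ex*(c3-c1)+ey*(d3-d1))*(d2-d1))
    by (unfold K; ring).
  assert (Ey : ey*K = -((ex*(c2-c1)+ey*(d2-d1))*(c3-c1) - (ex*(c3-c1)+ey*(d3-d1))*(c2-c1)))
    by (unfold K; ring).
  rewrite h2, h3 in Ex, Ey.
  destruct Hne as [Hn|Hn].
  - assert (ex <> 0) by (unfold ex; lra).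
    apply (Rmult_eq_reg_l ex); [lra|assumption].
  - assert (ey <> 0) by (unfold ey; lra).
    apply (Rmult_eq_reg_l ey); [lra|assumption].
Qed.

Lemma units (a1 b1 a2 b2 a3 b3 : R) :
  a1*a1+b1*b1 = 1 -> a2*a2+b2*b2 = 1 -> a3*a3+b3*b3 = 1 ->
  a1*a2+b1*b2 = -1/2 -> a2*a3+b2*b3 = -1/2 -> a3*a1+b3*b1 = -1/2 ->
  a3 = -a1-a2 /\ b3 = -b1-b2 /\ (a1*b2-b1*a2)*(a1*b2-b1*a2) = 3/4.
Proof.
  intros H1 H2 H3 H12 H23 H31.
  assert (S : (a1+a2+a3)*(a1+a2+a3) + (b1+b2+b3)*(b1+b2+b3) = 0).
  { transitivity ((a1*a1+b1*b1)+(a2*a2+b2*b2)+(a3*a3+b3*b3)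
       + 2*(a1*a2+b1*b2) + 2*(a2*a3+b2*b3) + 2*(a3*a1+b3*b1)); [ring|].
    rewrite H1,H2,H3,H12,H23,H31. field. }
  pose proof (Rle_0_sqr (a1+a2+a3)). pose proof (Rle_0_sqr (b1+b2+b3)).
  unfold Rsqr in *.
  assert (Sa : (a1+a2+a3)*(a1+a2+a3) = 0) by lra.
  assert (Sb : (b1+b2+b3)*(b1+b2+b3) = 0) by lra.
  apply Rmult_integral in Sa. apply Rmult_integral in Sb.
  split; [lra|]. split; [lra|].
  assert (L : (a1*b2-b1*a2)*(a1*b2-b1*a2) + (a1*a2+b1*b2)*(a1*a2+b1*b2)
            = (a1*a1+b1*b1)*(a2*a2+b2*b2)) by ring.
  rewrite H1, H2, H12 in L. lra.
Qed.

Theorem lemma2 (X C1 C2 C3 u1 u2 u3 : pt) :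
  arc_at X C1 u1 -> arc_at X C2 u2 -> arc_at X C3 u3 ->
  (* the three arcs form angles 2*pi/3 with each other at X *)
  dot u1 u2 = cos (2 * PI / 3) ->
  dot u2 u3 = cos (2 * PI / 3) ->
  dot u3 u1 = cos (2 * PI / 3) ->
  let r1 := pdist X C1 in let r2 := pdist X C2 in let r3 := pdist X C3 in
  (signed_curvature X C1 u1 + signed_curvature X C2 u2
     + signed_curvature X C3 u3 = 0 <-> collinear C1 C2 C3) /\
  (collinear C1 C2 C3 <->
     exists P Q : pt, P <> Q /\
       on_circle C1 r1 P /\ on_circle C2 r2 P /\ on_circle C3 r3 P /\
       on_circle C1 r1 Q /\ on_circle C2 r2 Q /\ on_circle C3 r3 Q).
Proof.
  intros A1 A2 A3 D12 D23 D31 r1 r2 r3.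
  rewrite cos23 in D12, D23, D31.
  pose proof A1 as [_ [U1 _]]. pose proof A2 as [_ [U2 _]].
  pose proof A3 as [_ [U3 _]].
  destruct (arc_param _ _ _ A1) as [k1 [K1 [Hc1 [Hd1 [S1 P1]]]]].
  destruct (arc_param _ _ _ A2) as [k2 [K2 [Hc2 [Hd2 [S2 P2]]]]].
  destruct (arc_param _ _ _ A3) as [k3 [K3 [Hc3 [Hd3 [S3 P3]]]]].
  rewrite S1, S2, S3.
  unfold r1, r2, r3, on_circle, collinear, pdist.
  clear r1 r2 r3 S1 S2 S3 P1 P2 P3 A1 A2 A3.
  destruct X as [x y], C1 as [c1 d1], C2 as [c2 d2], C3 as [c3 d3],
    u1 as [a1 b1], u2 as [a2 b2], u3 as [a3 b3].
  unfold unit_vec, dot, cross, vsub in *; simpl in *.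
  destruct (units a1 b1 a2 b2 a3 b3 U1 U2 U3 D12 D23 D31) as [Ha3 [Hb3 Hs]].
  subst c1 d1 c2 d2 c3 d3 a3 b3.
  set (s := a1*b2 - b1*a2) in *.
  assert (Hs0 : s <> 0) by (intro H0; rewrite H0 in Hs; lra).
  set (e := k1*k2+k2*k3+k3*k1).
  assert (Col : (x - k2 * b2 - (x - k1 * b1)) * (y + k3 * (- a1 - a2) - (y + k1 * a1)) -
     (y + k2 * a2 - (y + k1 * a1)) * (x - k3 * (- b1 - b2) - (x - k1 * b1)) = s * e)
    by (unfold s, e; ring).
  rewrite Col.
  idtac.
  assert (Sum : (- / k1 + - / k2 + - / k3) * (k1*k2*k3) = - e)
    by (unfold e; field; repeat split; assumption).
  split.
  - split; intro H.
    + rewrite H, Rmult_0_l in Sum. assert (e = 0) by lra. rewrite H0; ring.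
    + apply Rmult_integral in H. destruct H as [H|H]; [contradiction|].
      rewrite H in Sum.
      assert (Hp : k1*k2*k3 <> 0) by (repeat apply Rmult_integral_contrapositive_currified; assumption).
      apply (Rmult_eq_reg_r (k1*k2*k3)); [lra|assumption].
  - split.
    + intro H.
      apply Rmult_integral in H. destruct H as [H|H]; [contradiction|].
      set (wx := x - k2 * b2 - (x - k1 * b1)).
      set (wy := y + k2 * a2 - (y + k1 * a1)).
      set (n := wx*wx + wy*wy).
      set (cc := wx*(y + k1 * a1 - y) - wy*(x - k1 * b1 - x)).
      assert (Hcc : cc = - (k1*k2*s)) by (unfold cc, wx, wy, s; ring).
      assert (Hcc0 : cc <> 0).
      { rewrite Hcc. apply Ropp_neq_0_compat.
        repeat apply Rmult_integral_contrapositive_currified; assumption. }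
      assert (Hn : n <> 0).
      { intro Hn0. apply Hcc0. unfold n in Hn0.
        assert (wx = 0) by nra. assert (wy = 0) by nra.
        unfold cc. rewrite H0, H1. ring. }
      set (t := 2 * cc / n).
      exists (x + t*(-wy), y + t*wx), (x, y). simpl.
      assert (Hne : (x + t*(-wy), y + t*wx) <> (x, y)).
      { intro Heq. injection Heq as E1 E2.
        assert (t <> 0) by (unfold t; apply Rmult_integral_contrapositive_currified;
          [apply Rmult_integral_contrapositive_currified; lra|apply Rinv_neq_0_compat; exact Hn]).
        apply Hn. unfold n.
        assert (wy = 0) by (apply (Rmult_eq_reg_l t); lra).
        assert (wx = 0) by (apply (Rmult_eq_reg_l t); lra).
        rewrite H1, H2. ring. }
      split; [exact Hne|].
      repeat split; try reflexivity; f_equal.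
      * apply (refl_point x y (x - k1*b1) (y + k1*a1) (x - k2*b2) (y+k2*a2)); [exact Hn|ring].
      * apply (refl_point x y (x - k1*b1) (y + k1*a1) (x - k2*b2) (y+k2*a2)); [exact Hn|ring].
      * apply (refl_point x y (x - k1*b1) (y + k1*a1) (x - k2*b2) (y+k2*a2)); [exact Hn|].
        unfold wx, wy. transitivity (s*e); [unfold s, e; ring| rewrite H; ring].
    + intros [[p1 p2] [[q1 q2] [Hne [E1 [E2 [E3 [F1 [F2 F3]]]]]]]].
      simpl in *.
      try rewrite <- Col.
      assert (Hd : p1 <> q1 \/ p2 <> q2).
      { destruct (Req_dec p1 q1) as [h|h]; [|left; exact h].
        destruct (Req_dec p2 q2) as [h'|h']; [|right; exact h'].
        exfalso. apply Hne. rewrite h, h'. reflexivity. }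
      apply (perp_bis p1 p2 q1 q2); [exact Hd| | |];
        apply sqrt_inj; try (apply Rplus_le_le_0_compat; apply Rle_0_sqr).
      * rewrite E1, F1. reflexivity.
      * rewrite E2, F2. reflexivity.
      * rewrite E3, F3. reflexivity.
Qed.
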